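(* Let $K$ be a compact subset of $\mathbb R^d$, let $\mu\in\mathcal P(K)$ and let $q\in\mathbb R$. Then for any $\tau\in(\underline D_\mu(q),\overline D_\mu(q))$ there exists a sequence $(r_n)$ of positive numbers tending to $0$ such that $\frac{\log I_\mu(r_n,q)}{(q-1)\log r_n}\to\tau$ when $q\ne1$, and $\frac{I_\mu(r_n,1)}{\log r_n}\to\tau$ when $q=1$.
   Context: $\mathcal P(K)$ is the set of Borel probability measures on $K$; $B(x,r)$ is the open ball. For $q\ne1$: $I_\mu(r,q)=\int_K\mu(B(x,r))^{q-1}d\mu(x)$, $\underline D_\mu(q)=\liminf_{r\to0}\frac{\log I_\mu(r,q)}{(q-1)\log r}$, $\overline D_\mu(q)$ the $\limsup$. For $q=1$: $I_\mu(r,1)=\int_K\log\mu(B(x,r))d\mu(x)$, $\underline D_\mu(1)=\liminf_{r\to0}\frac{I_\mu(r,1)}{\log r}$, $\overline D_\mu(1)$ the $\limsup$. *)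

(* Defs.v *)
From HB Require Import structures.
From mathcomp Require Import all_boot all_order all_algebra.
From mathcomp Require Import all_classical all_reals all_analysis.
Set Implicit Arguments. Unset Strict Implicit. Unset Printing Implicit Defensive.
Import Order.TTheory GRing.Theory Num.Theory.
Import numFieldNormedType.Exports.
Local Open Scope classical_set_scope.
Local Open Scope ring_scope.

Definition Rd (R : realType) (d : nat) := 'rV[R]_d.

Definition BorelRd (R : realType) (d : nat) :=
  g_sigma_algebraType (@open ('rV[R]_d)).

Definition eball (R : realType) (d : nat) (x : BorelRd R d) (r : R)
  : set (BorelRd R d) :=
  [set y | Num.sqrt (\sum_(i < d) (x ord0 i - y ord0 i) ^+ 2) < r].

Definition Iq (R : realType) (d : nat) (K : set (BorelRd R d))
  (mu : probability (BorelRd R d) R) (r q : R) : \bar R :=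
  (\int[mu]_(x in K) ((fine (mu (eball x r))) `^ (q - 1))%:E)%E.

Definition I1 (R : realType) (d : nat) (K : set (BorelRd R d))
  (mu : probability (BorelRd R d) R) (r : R) : \bar R :=
  (\int[mu]_(x in K) (ln (fine (mu (eball x r))))%:E)%E.

Definition Dratio (R : realType) (d : nat) (K : set (BorelRd R d))
  (mu : probability (BorelRd R d) R) (q r : R) : R :=
  if q == 1 then fine (I1 K mu r) / ln r
  else ln (fine (Iq K mu r q)) / ((q - 1) * ln r).

Definition Dlow (R : realType) (d : nat) (K : set (BorelRd R d))
  (mu : probability (BorelRd R d) R) (q : R) : \bar R :=
  limf_einf (fun r : R => (Dratio K mu q r)%:E) (0 : R)^'+.

Definition Dup (R : realType) (d : nat) (K : set (BorelRd R d))
  (mu : probability (BorelRd R d) R) (q : R) : \bar R :=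
  limf_esup (fun r : R => (Dratio K mu q r)%:E) (0 : R)^'+.

(* Main.v *)
Require Import Defs.
From HB Require Import structures.
From mathcomp Require Import all_boot all_order all_algebra.
From mathcomp Require Import all_classical all_reals all_analysis.
Import Order.TTheory GRing.Theory Num.Theory.
Import numFieldNormedType.Exports.
Local Open Scope classical_set_scope.
Local Open Scope ring_scope.
From mathcomp Require Import finmap ring lra.

Section Geo.
Variable (R : realType) (d : nat).
Local Notation V := ('rV[R]_d).
Definition Ed (x y : V) : R := \sum_(i < d) (x ord0 i - y ord0 i) ^+ 2.

Lemma Ed_ge0 x y : 0 <= Ed x y.
Proof. by apply: sumr_ge0 => i _; exact: sqr_ge0. Qed.

Lemma eballE (x : BorelRd R d) r (y : V) : 0 < r -> eball x r y <-> Ed x y < r ^+ 2.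
Proof.
move=> r0; rewrite /eball /=.
have -> : r = Num.sqrt (r ^+ 2) by rewrite sqrtr_sqr gtr0_norm.
rewrite ltr_sqrt ?exprn_gt0// sqrtr_sqr gtr0_norm//.
Qed.

Lemma term_le_sum (f : 'I_d -> R) j : (forall i, 0 <= f i) -> f j <= \sum_i f i.
Proof.
move=> f0; rewrite (bigD1 j) //= lerDl; apply: sumr_ge0 => i _; exact: f0.
Qed.

Lemma sq_step (a b del s2 : R) : `|b| < del -> del <= 1 -> a ^+ 2 <= s2 ->
  (a + b) ^+ 2 <= a ^+ 2 + del * (3 + 2 * s2).
Proof.
move=> hb h3 h4; have /ltr_normlP [h1 h2] := hb.
have hd : 0 < del by lra.
have : 2 * a * b <= del * (1 + a ^+ 2).
  have e1 : 2 * a * b <= 2 * `|a| * `|b|.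
    have := ler_norm (a * b); rewrite normrM; lra.
  have e2 : `|b| <= del by exact/ltW.
  have e3 : 2 * `|a| <= 1 + a ^+ 2.
    rewrite -real_normK ?num_real //; have := sqr_ge0 (`|a| - 1); nra.
  have := normr_ge0 a; have := normr_ge0 b; nra.
have : b ^+ 2 <= del by nra.
nra.
Qed.

Lemma eball_open (x : BorelRd R d) r : open (eball x r : set V).
Proof.
have [r0|r0] := lerP r 0.
  have -> : (eball x r : set V) = set0.
    apply/seteqP; split => y //=; rewrite /eball /= => h.
    have := sqrtr_ge0 (\sum_(i < d) (x ord0 i - y ord0 i) ^+ 2); lra.
  exact: open0.
rewrite openE => y /(eballE x r y r0) hy.
set s2 := Ed x y in hy.
pose C := 3 + 2 * s2.
have s20 : 0 <= s2 by exact: Ed_ge0.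
have C0 : 0 < C by rewrite /C; lra.
pose del := Num.min 1 ((r ^+ 2 - s2) / ((d%:R + 1) * C)).
have hdel1 : del <= 1 by rewrite /del ge_min lexx.
have hdel2 : del <= (r ^+ 2 - s2) / ((d%:R + 1) * C) by rewrite /del ge_min lexx orbT.
have dpos : 0 < (d%:R + 1) * C :> R by apply: mulr_gt0 => //; rewrite ltr_wpDl.
have hdel0 : 0 < del.
  rewrite /del lt_min ltr01 /=; apply: divr_gt0 => //; lra.
apply/nbhs_ballP; exists del => // z [_ hz].
apply/(eballE x r z r0).
have step : forall i, (x ord0 i - z ord0 i) ^+ 2 <=
    (x ord0 i - y ord0 i) ^+ 2 + del * C.
  move=> i; have -> : x ord0 i - z ord0 i = (x ord0 i - y ord0 i) + (y ord0 i - z ord0 i) by ring.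
  apply: sq_step => //; first exact: hz.
  by apply: (term_le_sum (fun i => (x ord0 i - y ord0 i) ^+ 2)) => i0; exact: sqr_ge0.
apply: (le_lt_trans (ler_sum _ (fun i _ => step i))).
rewrite big_split /= sumr_const card_ord -/(Ed x y) -/s2.
have : d%:R * (del * C) < r ^+ 2 - s2.
  have hd0 : 0 <= d%:R :> R by [].
  have h1 : del * C <= (r ^+ 2 - s2) / (d%:R + 1) .
    apply: le_trans (ler_wpM2r (ltW C0) hdel2) _; rewrite le_eqVlt; apply/orP; left.
    apply/eqP; field; apply/andP; split; rewrite gt_eqF//; rewrite ltr_wpDl//.
  have h2 : d%:R * ((r ^+ 2 - s2) / (d%:R + 1)) < r ^+ 2 - s2.
    rewrite mulrA ltr_pdivrMr ?ltr_wpDl//.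
    have : 0 < r ^+ 2 - s2 by lra.
    nra.
  apply: le_lt_trans h2; apply: ler_wpM2l => //.
rewrite -mulr_natl; lra.
Qed.


Lemma box_in_eball (y z w : V) r : 0 < r ->
  ball y (r / (2 * (d%:R + 1))) z -> ball y (r / (2 * (d%:R + 1))) w ->
  eball (z : BorelRd R d) r w.
Proof.
move=> r0 [_ hz] [_ hw]; apply/(eballE z r w r0).
set del := r / (2 * (d%:R + 1)).
have d1 : 0 < d%:R + 1 :> R by rewrite ltr_wpDl.
have del0 : 0 < del by apply: divr_gt0 => //; apply: mulr_gt0.
have step : forall i : 'I_d, (z ord0 i - w ord0 i) ^+ 2 <= (2 * del) ^+ 2.
  move=> i; have := hz ord0 i; have := hw ord0 i; rewrite /ball /=.
  move=> /ltr_normlP [a1 a2] /ltr_normlP [b1 b2].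
  have h1 : `|z ord0 i - w ord0 i| <= 2 * del.
    rewrite -/del in a1 a2 b1 b2; apply/ler_normlP; split; lra.
  rewrite -real_normK ?num_real //; rewrite ler_sqr ?nnegrE//; lra.
apply: (le_lt_trans (ler_sum _ (fun i _ => step i))).
rewrite sumr_const card_ord -[X in X < _]mulr_natr.
have -> : (2 * del) ^+ 2 * d%:R = r ^+ 2 * d%:R / (d%:R + 1) ^+ 2.
  rewrite /del; field; rewrite gt_eqF//.
rewrite ltr_pdivrMr ?exprn_gt0//.
have hd : 0 <= d%:R :> R by [].
have r20 : 0 < r ^+ 2 by rewrite exprn_gt0.
nra.
Qed.

Lemma open_meas {A : set V} : open A -> measurable (A : set (BorelRd R d)).
Proof. by move=> oA; apply: sub_sigma_algebra. Qed.

Lemma eball_meas (x : BorelRd R d) r : measurable (eball x r).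
Proof. exact: (open_meas (eball_open x r)). Qed.

Local Open Scope ereal_scope.
Lemma null_cover (mu : probability (BorelRd R d) R) (K : set V) r :
  compact K -> (0 < r)%R -> exists N : set (BorelRd R d),
  [/\ measurable N, mu N = 0 & forall x, K x -> ~ N x -> 0 < mu (eball x r)].
Proof.
move=> cK r0.
set del := (r / (2 * (d%:R + 1)))%R.
have d1 : (0 < d%:R + 1 :> R)%R by rewrite ltr_wpDl.
have del0 : (0 < del)%R by apply: divr_gt0 => //; apply: mulr_gt0.
move: cK; rewrite compact_cover => cK.
have [D' _ cov] : finite_subset_cover K (fun y : V => ball y del) K.
  apply: cK.
  - by move=> i _; exact: ball_open.
  - by move=> x Kx; exists x => //; exact: ballxx.

pose G i : set V := if mu (ball i del) == 0 then ball i del else set0.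
exists (\bigcup_(i in [set i : V | i \in D']) G i); split.
- rewrite bigcup_fset; apply: big_ind => //.
  + by move=> A B mA mB; exact: measurableU.
  + move=> i _; rewrite /G; case: ifP => _ //; exact: (open_meas (ball_open _ _)).
- rewrite bigcup_fset.
  suff : measurable (\big[setU/set0]_(i <- D') G i : set (BorelRd R d)) /\
         mu (\big[setU/set0]_(i <- D') G i) = 0 by case.
  apply: (big_ind (fun A : set (BorelRd R d) => measurable A /\ mu A = 0)).
  + by split => //; exact: measure0.
  + move=> A B [mA muA] [mB muB]; split; first exact: measurableU.
    apply/eqP; rewrite eq_le measure_ge0 andbT.
    have h := measureU2 mu mA mB; have e : mu A + mu B = 0 by rewrite muA muB adde0.
    by apply: (le_trans h); rewrite -e lexx.
  + move=> i _; rewrite /G; case: ifP => [/eqP h|_]; split => //.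
    * exact: (open_meas (ball_open _ _)).
- move=> x Kx Nx; have [i Di bix] := cov x Kx.
  have bmeas : measurable (ball i del : set (BorelRd R d)) by exact: (open_meas (ball_open _ _)).
  have [h|h] := eqVneq (mu (ball i del)) 0.
    by exfalso; apply: Nx; exists i => //; rewrite /G h eqxx.
  have : 0 < mu (ball i del) by rewrite lt_def h measure_ge0.
  move=> /lt_le_trans; apply.
  have sub : (ball i del : set (BorelRd R d)) `<=` eball x r.
    by move=> w biw; exact: (box_in_eball _ _ _ _ r0 bix biw).
  apply: (le_measure mu _ _ sub); apply: mem_set; [exact: (open_meas (ball_open _ _))|exact: eball_meas].
Qed.

End Geo.

Section Int.
Local Open Scope ereal_scope.
Context d0 (T : measurableType d0) (R : realType) (mu : {measure set T -> \bar R}).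

Lemma int_mono (f g : T -> \bar R) : (forall x, 0 <= f x) -> (forall x, f x <= g x) ->
  \int[mu]_x f x <= \int[mu]_x g x.
Proof.
move=> f0 fg; have g0 x : 0 <= g x by apply: le_trans (f0 x) (fg x).
rewrite !ge0_integralTE//; apply: le_ereal_sup => _ [h hf <-].
by exists h => // x; apply: le_trans (hf x) (fg x).
Qed.

Import HBNNSimple.

Lemma int_null (f : T -> \bar R) (N : set T) : measurable N -> mu N = 0 ->
  (forall x, 0 <= f x) -> \int[mu]_x f x <= \int[mu]_x (f \_ (~` N)) x.
Proof.
move=> mN muN f0; rewrite [X in X <= _]ge0_integralTE//.
apply: ge_ereal_sup => _ [h hf <-].
rewrite -integralT_nnsfun.
rewrite (ge0_negligible_integral _ _ _ _ muN)//; last 2 first.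
- by apply/measurable_realfun.measurable_EFinP; exact: measurable_funP.
- by move=> x _; rewrite lee_fin.
rewrite -setTD integral_mkcond; apply: int_mono.
  by move=> x; rewrite patchE; case: ifP => // _; rewrite lee_fin.
by move=> x; rewrite !patchE; case: ifP => // _; apply: hf.
Qed.

Lemma int_ae_mono (f g : T -> \bar R) (N : set T) : measurable N -> mu N = 0 ->
  (forall x, 0 <= f x) -> (forall x, 0 <= g x) -> (forall x, ~ N x -> f x <= g x) ->
  \int[mu]_x f x <= \int[mu]_x g x.
Proof.
move=> mN muN f0 g0 fg; have h1 := int_null f N mN muN f0; apply: le_trans h1 _.
apply: int_mono.
  by move=> x; rewrite patchE; case: ifP => //.
move=> x; rewrite patchE; case: ifP => // /set_mem; exact: fg.
Qed.

End Int.

Section Abs.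
Variable R : realType.

Lemma crossing (v : nat -> R) (tau : R) m : v 0%N <= tau -> tau < v m ->
  exists j, (j < m)%N /\ v j <= tau /\ tau < v j.+1.
Proof.
elim: m => [h1 h2|m IH h1 h2]; first by exfalso; lra.
have [hm|hm] := lerP (v m) tau; first by exists m.
have [j [jm hj]] := IH h1 hm; exists j; split => //; exact: ltnW.
Qed.

Lemma approx (g : R -> R) (tau del : R) : 0 < del <= 1 ->
  (forall r r', 0 < r -> r <= r' -> r' < del -> g r * ln r <= g r' * ln r') ->
  (forall eta, 0 < eta -> exists r, 0 < r < eta /\ g r < tau) ->
  (forall eta, 0 < eta -> exists r, 0 < r < eta /\ tau < g r) ->
  forall eps eta, 0 < eps -> 0 < eta -> exists r, 0 < r < eta /\ `|g r - tau| < eps.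
Proof.
move=> /andP[del0 del1] mono hlow hup eps eta eps0 eta0.
have hmin : 0 < Num.min eta del by rewrite lt_min eta0 del0.
have [r2 [/andP[r20 r2m] hr2]] := hup (Num.min eta del) hmin.
have r2eta : r2 < eta by move: r2m; rewrite lt_min => /andP[].
have r2del : r2 < del by move: r2m; rewrite lt_min => /andP[].
have [r1 [/andP[r10 r12] hr1]] := hlow r2 r20.
pose a := - ln r1; pose b := - ln r2.
have b0 : 0 < b by rewrite /b oppr_gt0; apply: ln_lt0; rewrite r20 /=; lra.
have ab : b < a by rewrite /a /b ltrN2 ltr_ln ?posrE.
pose m := (Num.Def.trunc (`|tau| * (a - b) / (eps * b))).+1.
have hm : `|tau| * (a - b) / (eps * b) < m%:R by exact: truncnS_gt.
have m0 : (0 < m)%N by [].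
have mR : 0 < m%:R :> R by rewrite ltr0n.
pose h := (a - b) / m%:R.
have h0 : 0 < h by apply: divr_gt0 => //; lra.
have hh : `|tau| * h < eps * b.
  have eb : 0 < eps * b by apply: mulr_gt0.
  rewrite /h mulrA ltr_pdivrMr //.
  by rewrite -ltr_pdivrMl // mulrC.
pose x (j : nat) := a - j%:R * h.
pose t (j : nat) := expR (- x j).
have tln j : ln (t j) = - x j by rewrite /t expRK.
have t0 : t 0%N = r1 by rewrite /t /x mul0r subr0 /a opprK lnK ?posrE.
have tm : t m = r2.
  rewrite /t /x /h mulrC divfK ?gt_eqF //.
  have -> : - (a - (a - b)) = ln r2 by rewrite /b; ring.
  by rewrite lnK ?posrE.
have [j [jm [hj1 hj2]]] := crossing (fun j => g (t j)) tau m
  (ltac:(by rewrite /= t0; exact: ltW)) (ltac:(by rewrite /= tm)).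
have xj1b : b <= x j.+1.
  rewrite /x; have : (j.+1)%:R <= m%:R :> R by rewrite ler_nat.
  have : m%:R * h = a - b by rewrite /h mulrC divfK ?gt_eqF.
  nra.
have xjS : x j = x j.+1 + h by rewrite /x -addn1 natrD; ring.
have tj0 : 0 < t j by rewrite /t expR_gt0.
have tjle : t j <= t j.+1 by rewrite /t ler_expR; lra.
have tj1r2 : t j.+1 <= r2.
  rewrite -tm /t ler_expR.
  have : (j.+1)%:R <= m%:R :> R by rewrite ler_nat.
  rewrite /x; nra.
have tj1del : t j.+1 < del by apply: le_lt_trans r2del.
have := mono _ _ tj0 tjle tj1del; rewrite !tln => hmono.
exists (t j.+1); split.
  by rewrite expR_gt0 /=; apply: le_lt_trans r2eta.
set G := g (t j.+1) in hj2 hmono *.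
set F := g (t j) in hj1 hmono.
have xj0 : 0 < x j.+1 by lra.
have e1 : G * x j.+1 <= tau * x j by nra.
have e2 : (G - tau) * x j.+1 <= `|tau| * h.
  have := ler_norm tau; nra.
have e3 : (G - tau) * x j.+1 < eps * x j.+1.
  apply: (le_lt_trans e2); apply: (lt_le_trans hh); apply: ler_wpM2l; lra.
rewrite gtr0_norm; last lra.
by rewrite -(ltr_pM2r xj0).
Qed.


Lemma seq_of (g : R -> R) tau :
  (forall eps eta, 0 < eps -> 0 < eta -> exists r, 0 < r < eta /\ `|g r - tau| < eps) ->
  exists r : nat -> R, (forall n, 0 < r n) /\ r @ \oo --> 0 /\
    (fun n => g (r n)) @ \oo --> tau.
Proof.
move=> H.
have H' : forall n : nat, exists r, 0 < r < n.+1%:R^-1 /\ `|g r - tau| < n.+1%:R^-1.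
  by move=> n; apply: H; rewrite invr_gt0 ltr0n.
have [f hf] := choice H'.
exists f; split; first by move=> n; have [/andP[]] := hf n.
split.
  apply/cvgrPdist_lt => e e0; near=> n.
  have [/andP[h1 h2] _] := hf n.
  rewrite sub0r normrN gtr0_norm //; apply: (lt_trans h2).
  near: n; exact: (near_infty_natSinv_lt (PosNum e0)).
apply/cvgrPdist_lt => e e0; near=> n.
have [_ h] := hf n.
rewrite distrC; apply: (lt_trans h).
near: n; exact: (near_infty_natSinv_lt (PosNum e0)).
Unshelve. all: by end_near.
Qed.

Lemma right_set eta : 0 < eta -> (0 : R)^'+ [set r | 0 < r < eta].
Proof.
move=> eta0; near=> r; apply/andP; split.
  near: r; exact: nbhs_right_gt.
near: r; exact: nbhs_right_lt.
Unshelve. all: by end_near.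
Qed.

Lemma from_esup (f : R -> R) tau :
  (tau%:E < limf_esup (fun r => (f r)%:E) (0 : R)^'+)%E ->
  forall eta, 0 < eta -> exists r, 0 < r < eta /\ tau < f r.
Proof.
move=> H eta eta0; apply/not_existsP => hn.
have : (limf_esup (fun r => (f r)%:E) (0 : R)^'+ <= tau%:E)%E.
  rewrite limf_esupE; apply: le_trans.
    apply: ereal_inf_lbound; exists [set r | 0 < r < eta] => //.
    exact: right_set.
  apply: ge_ereal_sup => _ [r hr <-]; rewrite lee_fin.
  by rewrite leNgt; apply/negP => h; apply: (hn r).
by rewrite leNgt H.
Qed.

Lemma from_einf (f : R -> R) tau :
  (limf_einf (fun r => (f r)%:E) (0 : R)^'+ < tau%:E)%E ->
  forall eta, 0 < eta -> exists r, 0 < r < eta /\ f r < tau.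
Proof.
move=> H eta eta0.
have H' : ((- tau)%:E < limf_esup (fun r => (- f r)%:E) (0 : R)^'+)%E.
  have -> : (fun r => (- f r)%:E) = (\- (fun r => (f r)%:E))%E by apply/funext => r.
  by rewrite limf_esupN EFinN lteN2.
have [r [hr h]] := from_esup (fun r => - f r) (- tau) H' eta eta0; exists r; split => //; lra.
Qed.

End Abs.


Section Pow.
Variable R : realType.
Lemma powR_mono_base (a b p : R) : 0 <= a -> a <= b -> 0 < p -> a `^ p <= b `^ p.
Proof.
move=> a0 ab p0; have [ae|an0] := eqVneq a 0.
  by rewrite ae {1}/powR eqxx gt_eqF //= powR_ge0.
have a0' : 0 < a by rewrite lt_def an0.
have b0 : 0 < b by lra.
rewrite /powR !gt_eqF // ler_expR ler_pM2l // ler_ln ?posrE//.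
Qed.
Lemma powR_anti_base (a b p : R) : 0 < a -> a <= b -> p < 0 -> b `^ p <= a `^ p.
Proof.
move=> a0 ab p0; have b0 : 0 < b by lra.
rewrite /powR !gt_eqF // ler_expR ler_nM2l // ler_ln ?posrE//.
Qed.
Lemma powR_le1' (a p : R) : 0 <= a -> a <= 1 -> 0 < p -> a `^ p <= 1.
Proof. by move=> a0 a1 p0; have := powR_mono_base _ _ _ a0 a1 p0; rewrite powR1. Qed.
Lemma powR_ge1' (a p : R) : 0 < a -> a <= 1 -> p < 0 -> 1 <= a `^ p.
Proof. by move=> a0 a1 p0; have := powR_anti_base _ _ _ a0 a1 p0; rewrite powR1. Qed.
End Pow.
Arguments powR_mono_base {R a b p}.
Arguments powR_anti_base {R a b p}.
Arguments powR_le1' {R a p}.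
Arguments powR_ge1' {R a p}.

Section Main.
Variables (R : realType) (d : nat) (K : set (BorelRd R d))
  (mu : probability (BorelRd R d) R).
Local Notation m x r := (fine (mu (eball x r))).

Lemma mu_fin x r : mu (eball x r) \is a fin_num.
Proof.
rewrite ge0_fin_numE ?measure_ge0//.
by apply: (le_lt_trans (probability_le1 mu (eball_meas _ _ x r))); rewrite ltey.
Qed.

Lemma m_ge0 x r : 0 <= m x r.
Proof. by apply: fine_ge0; exact: measure_ge0. Qed.

Lemma m_le1 x r : m x r <= 1.
Proof.
rewrite -lee_fin fineK ?mu_fin//; exact: (probability_le1 mu (eball_meas _ _ x r)).
Qed.

Lemma m_mono x r r' : r <= r' -> m x r <= m x r'.
Proof.
move=> rr'; apply: fine_le; rewrite ?mu_fin//.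
apply: le_measure; rewrite ?inE; try apply: mem_set; try exact: (eball_meas _ _).
by move=> y; rewrite /eball /= => h; lra.
Qed.


Lemma div_ln (A c l : R) : c != 0 -> l != 0 -> A / (c * l) * l = A / c.
Proof. by move=> c0 l0; field; rewrite c0 l0. Qed.

Lemma ln_neq0 (r : R) : 0 < r -> r < 1 -> ln r != 0.
Proof. by move=> r0 r1; rewrite lt_eqF // ln_lt0 // r0 r1. Qed.

Definition mono_or_zero (q : R) :=
  (exists r0, 0 < r0 /\ forall r, 0 < r < r0 -> Dratio K mu q r = 0) \/
  (forall r r', 0 < r -> r <= r' -> r' < 1 ->
     Dratio K mu q r * ln r <= Dratio K mu q r' * ln r').

Lemma Iq_patch r q : Iq K mu r q =
  (\int[mu]_x ((fun x => ((m x r) `^ (q - 1))%:E) \_ K) x)%E.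
Proof. by rewrite /Iq integral_mkcond. Qed.

Lemma case_gt1 q : 1 < q -> mono_or_zero q.
Proof.
move=> q1.
have qn1 : q != 1 by rewrite gt_eqF.
have q10 : 0 < q - 1 by lra.
set psi := fun r x => ((m x r) `^ (q - 1))%:E.
have psi0 : forall r x, (0 <= (psi r \_ K) x)%E.
  by move=> r x; rewrite patchE; case: ifP => // _; rewrite lee_fin powR_ge0.
have Imono : forall r r', r <= r' -> (Iq K mu r q <= Iq K mu r' q)%E.
  move=> r r' rr'; rewrite !Iq_patch; apply: int_mono => x.
    by rewrite patchE; case: ifP => // _; rewrite lee_fin powR_ge0.
  rewrite !patchE; case: ifP => // _; rewrite lee_fin.
  exact: (powR_mono_base (m_ge0 _ _) (m_mono _ _ _ rr') q10).
have Ile1 : forall r, (Iq K mu r q <= 1)%E.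
  move=> r; rewrite Iq_patch.
  apply: (le_trans (int_mono _ _ _ mu _ (cst 1%E) (psi0 r) _)).
    move=> x; rewrite patchE; case: ifP => // _.
    by rewrite lee_fin; apply: powR_le1' => //; [exact: m_ge0|exact: m_le1].
  rewrite integral_cst // mul1e.
  by apply: probability_le1; exact: measurableT.
have Ige0 : forall r, (0 <= Iq K mu r q)%E.
  by move=> r; apply: integral_ge0 => x _; rewrite lee_fin powR_ge0.
have Ifin : forall r, Iq K mu r q \is a fin_num.
  by move=> r; rewrite ge0_fin_numE // (le_lt_trans (Ile1 r)) // ltey.
have Jmono : forall r r', r <= r' -> fine (Iq K mu r q) <= fine (Iq K mu r' q).
  by move=> r r' rr'; apply: fine_le; [exact: Ifin|exact: Ifin|exact: Imono].
have J0 : forall r, 0 <= fine (Iq K mu r q) by move=> r; apply: fine_ge0.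
have DE : forall r, Dratio K mu q r = ln (fine (Iq K mu r q)) / ((q - 1) * ln r).
  by move=> r; rewrite /Dratio (negbTE qn1).
have [[r0 [/andP[r00 r01] hJ]]|hn] :=
  pselect (exists r0, 0 < r0 < 1 /\ fine (Iq K mu r0 q) = 0).
  left; exists r0; split => // r /andP[r0' rr0].
  have : fine (Iq K mu r q) = 0.
    by apply/eqP; rewrite eq_le J0 andbT -hJ Jmono // ltW.
  by move=> h; rewrite DE h ln0 // mul0r.
right => r r' r0 rr' r'1.
have r1 : r < 1 by lra.
have Jpos : forall s, 0 < s -> s < 1 -> 0 < fine (Iq K mu s q).
  move=> s s0 s1; rewrite lt_def J0 andbT; apply/negP => /eqP h.
  by apply: hn; exists s; split => //; rewrite s0 s1.
have r'0 : 0 < r' by lra.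
have l0 := ln_neq0 _ r0 r1; have l0' := ln_neq0 _ r'0 r'1.
have q0 : q - 1 != 0 by rewrite gt_eqF.
rewrite !DE (div_ln _ _ _ q0 l0) (div_ln _ _ _ q0 l0').
have qi : 0 < (q - 1)^-1 by rewrite invr_gt0.
rewrite (ler_pM2r qi) (ler_ln (Jpos _ r0 r1) (Jpos _ r'0 r'1)).
exact: Jmono.
Qed.


Lemma K_meas : compact (K : set 'rV[R]_d) -> measurable K.
Proof.
move=> cK; have clK : closed (K : set 'rV[R]_d) by apply: compact_closed => //; exact: norm_hausdorff.
have : measurable (~` (K : set (BorelRd R d))).
  apply: open_meas; by rewrite openC.
by move=> /measurableC; rewrite setCK.
Qed.

Lemma m_pos x r : (0 < mu (eball x r))%E -> 0 < m x r.
Proof.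
move=> h; apply: fine_gt0; rewrite h /=.
by apply: (le_lt_trans (probability_le1 mu (eball_meas _ _ x r))); rewrite ltey.
Qed.

Lemma case_lt1 q : compact (K : set 'rV[R]_d) -> mu K = 1%E -> q < 1 -> mono_or_zero q.
Proof.
move=> cK muK q1.
have qn1 : q != 1 by rewrite lt_eqF.
have q10 : q - 1 < 0 by lra.
set psi := fun r x => ((m x r) `^ (q - 1))%:E.
have psi0 : forall r x, (0 <= (psi r \_ K) x)%E.
  by move=> r x; rewrite patchE; case: ifP => // _; rewrite lee_fin powR_ge0.
have Imono : forall r r', 0 < r -> r <= r' -> (Iq K mu r' q <= Iq K mu r q)%E.
  move=> r r' r0 rr'; have [N [mN muN hN]] := null_cover R d mu K r cK r0.
  rewrite !Iq_patch; apply: (int_ae_mono _ _ _ mu _ _ N mN muN (psi0 r') (psi0 r)).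
  move=> x Nx; rewrite !patchE; case: ifP => // /set_mem Kx; rewrite lee_fin.
  apply: (powR_anti_base (m_pos _ _ (hN x Kx Nx)) (m_mono _ _ _ rr') q10).
have Ige1 : forall r, 0 < r -> (1 <= Iq K mu r q)%E.
  move=> r r0; have [N [mN muN hN]] := null_cover R d mu K r cK r0.
  have -> : (1 = \int[mu]_x ((cst 1%E) \_ K) x)%E.
    rewrite -integral_mkcond integral_cst; last exact: K_meas.
    by rewrite mul1e; exact: (esym muK).
  rewrite Iq_patch; apply: (int_ae_mono _ _ _ mu _ _ N mN muN _ (psi0 r)).
    by move=> x; rewrite patchE; case: ifP.
  move=> x Nx; rewrite !patchE; case: ifP => // /set_mem Kx; rewrite lee_fin.
  exact: (powR_ge1' (m_pos _ _ (hN x Kx Nx)) (m_le1 _ _) q10).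
have DE : forall r, Dratio K mu q r = ln (fine (Iq K mu r q)) / ((q - 1) * ln r).
  by move=> r; rewrite /Dratio (negbTE qn1).
have [[r0 [/andP[r00 r01] hI]]|hn] :=
  pselect (exists r0, 0 < r0 < 1 /\ Iq K mu r0 q = +oo%E).
  left; exists r0; split => // r /andP[r0' rr0].
  have : Iq K mu r q = +oo%E.
    by apply/eqP; rewrite eq_le leey /= -hI Imono // ltW.
  by move=> h; rewrite DE h /= ln0 // mul0r.
right => r r' r0 rr' r'1.
have r1 : r < 1 by lra.
have r'0 : 0 < r' by lra.
have Ifin : forall s, 0 < s -> s < 1 -> Iq K mu s q \is a fin_num.
  move=> s s0 s1; rewrite ge0_fin_numE; last by apply: le_trans (Ige1 s s0).
  rewrite lt_neqAle leey andbT; apply/negP => /eqP h.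
  by apply: hn; exists s; split => //; rewrite s0 s1.
have Jge1 : forall s, 0 < s -> s < 1 -> 1 <= fine (Iq K mu s q).
  by move=> s s0 s1; rewrite -lee_fin fineK ?Ifin //; exact: Ige1.
have l0 := ln_neq0 _ r0 r1; have l0' := ln_neq0 _ r'0 r'1.
have q0 : q - 1 != 0 by rewrite lt_eqF.
rewrite !DE (div_ln _ _ _ q0 l0) (div_ln _ _ _ q0 l0').
have qi : (q - 1)^-1 < 0 by rewrite invr_lt0.
have J1 := Jge1 _ r0 r1; have J2 := Jge1 _ r'0 r'1.
have P1 : fine (Iq K mu r q) \in Num.pos by rewrite posrE; exact: (lt_le_trans ltr01 J1).
have P2 : fine (Iq K mu r' q) \in Num.pos by rewrite posrE; exact: (lt_le_trans ltr01 J2).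
rewrite (ler_nM2r qi) (ler_ln P2 P1).
apply: fine_le; [exact: Ifin|exact: Ifin|exact: Imono].
Qed.


Lemma case_eq1 q : compact (K : set 'rV[R]_d) -> q = 1 -> mono_or_zero q.
Proof.
move=> cK q1.
set phi := fun r x => (ln (m x r))%:E.
have phi0 : forall r x, (phi r x <= 0)%E by move=> r x; rewrite lee_fin ln_le0 // m_le1.
set H := fun r => (\int[mu]_x ((\- phi r) \_ K)%E x)%E.
have H0 : forall r x, (0 <= ((\- phi r) \_ K)%E x)%E.
  move=> r x; rewrite patchE; case: ifP => // _ /=.
  by rewrite lee_fin oppr_ge0 ln_le0 // m_le1.
have IE : forall r, I1 K mu r = (- H r)%E.
  move=> r; rewrite /I1 integralE.
  rewrite (eq_integral (cst 0%E)); last first.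
    by move=> x xK; apply: (le0_funeposE (D := K)) => // y _; exact: phi0.
  rewrite integral0 sub0e (eq_integral (\- phi r)%E); last first.
    by move=> x xK; apply: (le0_funenegE (D := K)) => // y _; exact: phi0.
  by rewrite integral_mkcond.
have Hmono : forall r r', 0 < r -> r <= r' -> (H r' <= H r)%E.
  move=> r r' r0 rr'; have [N [mN muN hN]] := null_cover R d mu K r cK r0.
  apply: (int_ae_mono _ _ _ mu _ _ N mN muN (H0 r') (H0 r)).
  move=> x Nx; rewrite !patchE; case: ifP => // /set_mem Kx /=.
  rewrite lee_fin lerN2 ler_ln ?posrE; first exact: m_mono.
    exact: (m_pos _ _ (hN x Kx Nx)).
  exact: (lt_le_trans (m_pos _ _ (hN x Kx Nx)) (m_mono _ _ _ rr')).
have DE : forall r, Dratio K mu q r = fine (I1 K mu r) / ln r.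
  by move=> r; rewrite /Dratio q1 eqxx.
have [[r0 [/andP[r00 r01] hI]]|hn] :=
  pselect (exists r0, 0 < r0 < 1 /\ H r0 = +oo%E).
  left; exists r0; split => // r /andP[r0' rr0].
  have : H r = +oo%E.
    by apply/eqP; rewrite eq_le leey /= -hI Hmono // ltW.
  by move=> h; rewrite DE IE h /= mul0r.
right => r r' r0 rr' r'1.
have r1 : r < 1 := le_lt_trans rr' r'1.
have r'0 : 0 < r' := lt_le_trans r0 rr'.
have Hfin : forall s, 0 < s -> s < 1 -> H s \is a fin_num.
  move=> s s0 s1; rewrite ge0_fin_numE; last by apply: integral_ge0 => x _; exact: H0.
  rewrite lt_neqAle leey andbT; apply/negP => /eqP h.
  by apply: hn; exists s; split => //; rewrite s0 s1.
have l0 := ln_neq0 _ r0 r1; have l0' := ln_neq0 _ r'0 r'1.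
rewrite !DE !divfK // !IE !fineN lerN2.
apply: fine_le; [exact: Hfin|exact: Hfin|exact: Hmono].
Qed.

End Main.

Theorem proposition7p3 (R : realType) (d : nat) (K : set (BorelRd R d))
  (mu : probability (BorelRd R d) R) (q tau : R) :
  compact (K : set 'rV[R]_d) -> mu K = 1%E ->
  (Dlow K mu q < tau%:E < Dup K mu q)%E ->
  exists r : nat -> R,
    (forall n, 0 < r n) /\ r @ \oo --> 0 /\
    (fun n => Dratio K mu q (r n)) @ \oo --> tau.
Proof.
move=> cK muK /andP[hlo hup].
have hl := from_einf R (Dratio K mu q) tau hlo.
have hu := from_esup R (Dratio K mu q) tau hup.
have mz : mono_or_zero R d K mu q.
  have [q1|q1|q1] := ltgtP q 1.
  - exact: case_lt1.
  - exact: case_gt1.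
  - exact: case_eq1.
case: mz => [[r0 [r00 hz]]|mono].
  have [r [hr h]] := hl r0 r00; have [r' [hr' h']] := hu r0 r00.
  rewrite hz // in h; rewrite hz // in h'.
  by have := lt_trans h' h; rewrite ltxx.
apply: seq_of; apply: (approx R (Dratio K mu q) tau 1) => //.
by rewrite ltr01 lexx.
Qed.
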